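(* Let $n\ge 3$ and let $\mathbb{F}$ be a field of characteristic $0$ or of odd prime characteristic $p$. In the group algebra $\mathbb{F}D_{2n}$: (i) the set $\{a^i-a^{-i},\ (a^i-a^{-i})b \mid i=1,2,\dots,\lfloor\frac{n-1}{2}\rfloor\}$ is an $\mathbb{F}$-basis of $\bar{C}(b)$; (ii) the set $\{a^i-a^{-i},\ a(a^i-a^{-i})b \mid i=1,2,\dots,\lfloor\frac{n-1}{2}\rfloor\}$ is an $\mathbb{F}$-basis of $\bar{C}(ab)$.
   Context: $D_{2n}=\langle a,b\mid a^n=1,\ b^2=1,\ (ab)^2=1\rangle$ is the dihedral group of order $2n$, whose elements are $a^ib^j$ with $0\le i\le n-1$, $0\le j\le 1$. $\mathbb{F}D_{2n}$ is its group algebra over $\mathbb{F}$. For $\beta\in\mathbb{F}D_{2n}$, the anti-centralizer of $\beta$ is $\bar{C}(\beta)=\{\alpha\in\mathbb{F}D_{2n}\mid \alpha\beta=-\beta\alpha\}$, an $\mathbb{F}$-subspace. $\lfloor x\rfloor$ denotes the floor of $x$. *)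

(* Defs.v *)
From HB Require Import structures.
From mathcomp Require Import all_boot all_algebra.
Set Implicit Arguments. Unset Strict Implicit. Unset Printing Implicit Defensive.
Import GRing.Theory.
Local Open Scope ring_scope.

(* The dihedral group D_{2n} = <a, b | a^n = b^2 = (ab)^2 = 1>, realized
   concretely: the element a^i b^j (i in Z/nZ, j in {0,1}) is the pair
   (i, j) : 'Z_n * bool.  'Z_n is Z/nZ for n >= 2 (we always assume n >= 3).
   Since b a b = a^{-1}, (a^i b^j)(a^k b^l) = a^(i + (-1)^j k) b^(j+l). *)
Definition dih (n : nat) := ('Z_n * bool)%type.

Definition dmul (n : nat) (x y : dih n) : dih n :=
  (x.1 + (if x.2 then - y.1 else y.1), x.2 (+) y.2).

Definition da (n : nat) : dih n := (1, false).
Definition db (n : nat) : dih n := (0, true).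
Definition dapow (n : nat) (i : int) : dih n := (i%:~R, false).

(* The group algebra F D_{2n}: F-valued functions on D_{2n}
   (formal F-linear combinations of group elements), with convolution
   product. *)
Definition galg (F : fieldType) (n : nat) := {ffun dih n -> F^o}.

Definition gmul (F : fieldType) (n : nat) (x y : galg F n) : galg F n :=
  [ffun g => \sum_(h : dih n) \sum_(k : dih n)
               (if dmul h k == g then x h * y k else 0)].

Definition gel (F : fieldType) (n : nat) (g : dih n) : galg F n :=
  [ffun h => if h == g then 1 else 0].

Definition anticent (F : fieldType) (n : nat) (beta alpha : galg F n) : bool :=
  gmul alpha beta == - gmul beta alpha.

Definition basis_of_anticent (F : fieldType) (n : nat) (beta : galg F n)
    (X : seq (galg F n)) : Prop :=
  free X /\ (forall alpha : galg F n, (alpha \in <<X>>%VS) = anticent beta alpha).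

(* Main.v *)
Require Import Defs.
From HB Require Import structures.
From mathcomp Require Import all_boot all_algebra.
From mathcomp Require Import zify ring.
Set Implicit Arguments. Unset Strict Implicit. Unset Printing Implicit Defensive.
Import GRing.Theory.
Local Open Scope ring_scope.


Definition dinv (n : nat) (g : dih n) : dih n := (if g.2 then g.1 else - g.1, g.2).

Section G.
Variables (F : fieldType) (n : nat).

Lemma dmulKr (g : dih n) : cancel (fun h => dmul h g) (fun h => dmul h (dinv g)).
Proof. by case: g => y t [x s]; case: s; case: t; rewrite /dmul /dinv /=; congr pair; ring. Qed.
Lemma dmulKr' (g : dih n) : cancel (fun h => dmul h (dinv g)) (fun h => dmul h g).
Proof. by case: g => y t [x s]; case: s; case: t; rewrite /dmul /dinv /=; congr pair; ring. Qed.
Lemma dmulKl (g : dih n) : cancel (dmul g) (dmul (dinv g)).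
Proof. by case: g => y t [x s]; case: s; case: t; rewrite /dmul /dinv /=; congr pair; ring. Qed.
Lemma dmulKl' (g : dih n) : cancel (dmul (dinv g)) (dmul g).
Proof. by case: g => y t [x s]; case: s; case: t; rewrite /dmul /dinv /=; congr pair; ring. Qed.

Lemma gelE (g h : dih n) : gel F g h = if h == g then 1 else 0 :> F.
Proof. by rewrite ffunE. Qed.

Lemma gmul_gelr (x : galg F n) g :
  gmul x (gel F g) = [ffun h => x (dmul h (dinv g))].
Proof.
apply/ffunP => h; rewrite !ffunE.
have inner : forall h', \sum_(k : dih n) (if dmul h' k == h then x h' * gel F g k else 0)
   = if h' == dmul h (dinv g) then x h' else 0.
  move=> h'; rewrite (bigD1 g) //= [X in _ + X]big1 ?addr0 => [|k kg]; last first.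
    by rewrite gelE (negPf kg) mulr0 if_same.
  by rewrite gelE eqxx mulr1 (can2_eq (dmulKr g) (dmulKr' g)).
under eq_bigr do rewrite inner.
rewrite (bigD1 (dmul h (dinv g))) //= eqxx [X in _ + X]big1 ?addr0 // => h' hh'.
by rewrite (negPf hh').
Qed.

Lemma gmul_gell (x : galg F n) g :
  gmul (gel F g) x = [ffun h => x (dmul (dinv g) h)].
Proof.
apply/ffunP => h; rewrite !ffunE.
rewrite (bigD1 g) //= [X in _ + X]big1 ?addr0 => [|h' hh']; last first.
  by apply: big1 => k _; rewrite gelE (negPf hh') mul0r if_same.
rewrite (bigD1 (dmul (dinv g) h)) //= [X in _ + X]big1 ?addr0 => [|k kg]; last first.
  by rewrite gelE eqxx mul1r (can2_eq (dmulKl g) (dmulKl' g)) (negPf kg).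
by rewrite gelE eqxx mul1r dmulKl' eqxx.
Qed.

Lemma anticentP g (alpha : galg F n) :
  reflect (forall h, alpha (dmul h (dinv g)) = - alpha (dmul (dinv g) h))
          (anticent (gel F g) alpha).
Proof.
rewrite /anticent gmul_gelr gmul_gell; apply: (iffP eqP) => [H h|H].
  by move/ffunP: H => /(_ h); rewrite !ffunE.
by apply/ffunP => h; rewrite !ffunE H.
Qed.
End G.


Section Z.
Variables (F : fieldType) (n : nat) (hn : (2 < n)%N).
Let n1 : (1 < n)%N. Proof. lia. Qed.

Lemma valZ_lt (k : 'Z_n) : (val k < n)%N.
Proof. have := ltn_ord k; by rewrite [X in (_ < X)%N -> _]Zp_cast. Qed.

Lemma Zval (k : 'Z_n) : k = (val k)%:R.
Proof. by rewrite natr_Zp. Qed.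

Lemma natZ_eq x y : (x < n)%N -> (y < n)%N -> ((x%:R : 'Z_n) == y%:R) = (x == y).
Proof. by move=> xn yn; rewrite -val_eqE /= !val_Zp_nat // !modn_small. Qed.

Lemma negZ y : (y <= n)%N -> -(y%:R : 'Z_n) = (n - y)%:R.
Proof.
move=> yn; apply/eqP; rewrite eq_sym -addr_eq0 -natrD subnK //.
by rewrite pchar_Zp.
Qed.

Definition e (i : nat) (k : 'Z_n) : F :=
  (if k == i%:R then 1 else 0) - (if k == - i%:R then 1 else 0).

Let m := ((n - 1) %/ 2)%N.

Lemma pick (g : nat -> F) x :
  \sum_(j < m) g j * (if x == j.+1 then 1 else 0) =
  if (0 < x <= m)%N then g x.-1 else 0.
Proof.
case: ifP => H.
  have xm : (x.-1 < m)%N by lia.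
  rewrite (bigD1 (Ordinal xm)) //= [X in _ + X]big1 ?addr0 => [|j jx].
    by rewrite prednK ?eqxx ?mulr1 //; lia.
  have -> : (x == j.+1) = false.
    apply/negbTE/eqP => E; move/eqP: jx; apply; apply: val_inj => /=; lia.
  by rewrite mulr0.
rewrite big1 // => j _.
have -> : (x == j.+1) = false by apply/negbTE/eqP => E; have := ltn_ord j; lia.
by rewrite mulr0.
Qed.

Lemma SE (g : nat -> F) (k : 'Z_n) :
  \sum_(j < m) g j * e j.+1 k =
  (if (0 < val k <= m)%N then g (val k).-1 else 0) -
  (if (0 < n - val k <= m)%N then g (n - val k).-1 else 0).
Proof.
have vn := valZ_lt k.
rewrite -!pick -sumrB; apply: eq_bigr => j _.
have jn : (j.+1 < n)%N by have := ltn_ord j; lia.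
rewrite /e mulrBr; congr (_ * _ - _ * _).
  by rewrite {1}(Zval k) natZ_eq.
rewrite {1}(Zval k) negZ ?natZ_eq; try lia.
have -> : (val k == n - j.+1)%N = (n - val k == j.+1)%N by apply/eqP/eqP; lia.
by [].
Qed.

Lemma K2 (g : nat -> F) l : (l < m)%N ->
  \sum_(j < m) g j * e j.+1 (l.+1)%:R = g l.
Proof.
move=> lm; rewrite SE.
have -> : val ((l.+1)%:R : 'Z_n) = l.+1.
  by rewrite /= val_Zp_nat // modn_small //; lia.
have -> : (0 < l.+1 <= m)%N by lia.
have -> : (0 < n - l.+1 <= m)%N = false by lia.
by rewrite subr0.
Qed.

Lemma e_opp i k : e i (- k) = - e i k.
Proof. by rewrite /e !eqr_oppLR opprK opprB. Qed.

Lemma K1 (f : 'Z_n -> F) (two : (2%:R : F) != 0)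
  (fa : forall k, f (- k) = - f k) k :
  \sum_(j < m) f (j.+1)%:R * e j.+1 k = f k.
Proof.
have f0 : forall x : F, x = - x -> x = 0.
  move=> x /eqP; rewrite -addr_eq0 -mulr2n -mulr_natl mulf_eq0 (negPf two) /=.
  by move/eqP.
rewrite (SE (fun j => f (j.+1)%:R)).
have vn := valZ_lt k.
have fn : f (n - val k)%:R = - f k.
  by rewrite -negZ ?fa -?Zval //; lia.
have m2 : (m + m < n)%N by rewrite /m; lia.
case: ifP => H1; case: ifP => H2.
- exfalso; move: H1 H2; lia.
- by rewrite subr0 prednK -?Zval //; move: H1; lia.
- by rewrite sub0r prednK ?fn ?opprK //; move: H2; lia.
- rewrite subr0; symmetry; apply: f0.
  have [v0|v2] : val k = 0%N \/ n = (val k + val k)%N by move: H1 H2; lia.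
    by rewrite -fa; congr f; rewrite (Zval k) v0 oppr0.
  rewrite -fn; congr f; rewrite {1}(Zval k); congr (_%:R); lia.
Qed.
End Z.


Section Gen.
Variables (F : fieldType) (V : vectType F) (P Q : nat -> V) (m : nat) (S : V -> bool).
Hypothesis S0 : S 0.
Hypothesis Slin : forall a u v, S u -> S v -> S (a *: u + v).
Hypothesis SP : forall i, S (P i).
Hypothesis SQ : forall i, S (Q i).
Hypothesis indep : forall c d : nat -> F,
  \sum_(j < m) (c j *: P j.+1 + d j *: Q j.+1) = 0 ->
  forall j, (j < m)%N -> c j = 0 /\ d j = 0.
Hypothesis comp : forall v, S v -> exists c d : nat -> F,
  v = \sum_(j < m) (c j *: P j.+1 + d j *: Q j.+1).

Lemma gen_basis :
  free (map P (iota 1 m) ++ map Q (iota 1 m)) /\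
  forall v, (v \in <<map P (iota 1 m) ++ map Q (iota 1 m)>>%VS) = S v.
Proof.
set X := _ ++ _.
have sX : size X = (m + m)%N by rewrite size_cat !size_map size_iota.
have XP : forall j, (j < m)%N -> X`_j = P j.+1.
  move=> j jm; rewrite nth_cat size_map size_iota jm (nth_map 0) ?size_iota //.
  by rewrite nth_iota // add1n.
have XQ : forall j, (j < m)%N -> X`_(m + j) = Q j.+1.
  move=> j jm; rewrite nth_cat size_map size_iota.
  rewrite ltnNge leq_addr /= addKn (nth_map 0) ?size_iota //.
  by rewrite nth_iota // add1n.
have Sadd : forall u v, S u -> S v -> S (u + v).
  by move=> u v Su Sv; rewrite -[u]scale1r; apply: Slin.
have SZ : forall a u, S u -> S (a *: u).
  by move=> a u Su; rewrite -[_ *: _]addr0; apply: Slin.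
split.
  suff : free (in_tuple X) by []. apply/freeP => k Hk i.
  pose k' (j : nat) : F := if insub j is Some o then k o else 0.
  have kk : forall o : 'I_(size X), k' o = k o by move=> o; rewrite /k' valK.
  have : \sum_(j < m) (k' j *: P j.+1 + k' (m + j)%N *: Q j.+1) = 0.
    rewrite -[RHS]Hk (eq_bigr (fun i : 'I_(size X) => k' i *: X`_i)); last by move=> o _; rewrite kk.
    rewrite -(big_mkord xpredT (fun i => k' i *: X`_i)) sX big_mkord big_split_ord /=.
    rewrite big_split /=; congr (_ + _); apply: eq_bigr => j _ /=.
      by rewrite XP.
    by rewrite XQ.
  move/(indep (c := k') (d := fun j => k' (m + j)%N)) => H; rewrite -kk.
  have iX : (i < m + m)%N by rewrite -sX.
  case: (ltnP i m) => im; first by case: (H _ im).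
  have -> : nat_of_ord i = (m + (i - m))%N by lia.
  by case: (H (i - m)%N ltac:(lia)).
move=> v; apply/idP/idP => [vX|Sv].
  rewrite (coord_span vX); apply: (big_ind S) => // j _.
  apply: SZ; have : X`_j \in X by apply: mem_nth; rewrite sX.
  by rewrite mem_cat => /orP[] /mapP[i _ ->].
have [c [d ->]] := comp Sv.
apply: rpred_sum => j _; apply: rpredD; apply: rpredZ; apply: memv_span;
  rewrite mem_cat map_f ?orbT // mem_iota; have := ltn_ord j; lia.
Qed.
End Gen.


Section C.
Variables (F : fieldType) (n : nat) (hn : (2 < n)%N) (two : (2%:R : F) != 0).
Let m := ((n - 1) %/ 2)%N.

Definition Ael i : galg F n := gel F (dapow n i%:Z) - gel F (dapow n (- i%:Z)).
Definition Q1 i := gmul (Ael i) (gel F (db n)).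
Definition Q2 i := gmul (gmul (gel F (da n)) (Ael i)) (gel F (db n)).

Lemma ptE (a b : F) (u v : galg F n) h : (a *: u + b *: v) h = a * u h + b * v h.
Proof. by rewrite !ffunE. Qed.

Lemma pt0 h : (0 : galg F n) h = 0.
Proof. by rewrite ffunE. Qed.

Lemma Apt i k j : Ael i (k, j) = if j then 0 else e F i k.
Proof.
rewrite /Ael !ffunE /dapow /e !xpair_eqE intrN -pmulrn.
by case: j; rewrite /= ?andbT ?andbF ?subrr.
Qed.

Lemma Q1pt i k j : Q1 i (k, j) = if j then e F i k else 0.
Proof.
rewrite /Q1 gmul_gelr ffunE /dmul /dinv /db /= Apt.
by case: j; rewrite /= ?oppr0 ?addr0.
Qed.

Lemma Q2pt i k j : Q2 i (k, j) = if j then e F i (k - 1) else 0.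
Proof.
rewrite /Q2 gmul_gelr ffunE gmul_gell ffunE /dmul /dinv /da /db /= Apt.
by case: j; rewrite /= ?oppr0 ?addr0 // addrC.
Qed.

Lemma antib (alpha : galg F n) :
  anticent (gel F (db n)) alpha <-> forall k j, alpha (k, j) = - alpha (- k, j).
Proof.
split => [/anticentP H k j | H].
  have := H (k, ~~ j); rewrite /dmul /dinv /db /=.
  by case: j; rewrite /= ?oppr0 ?addr0 ?add0r.
apply/anticentP => -[k j]; rewrite /dmul /dinv /db /=.
by case: j; rewrite /= ?oppr0 ?addr0 ?add0r.
Qed.

Lemma antiab (alpha : galg F n) :
  anticent (gel F (dmul (da n) (db n))) alpha <->
  (forall k, alpha (k, false) = - alpha (- k, false)) /\
  (forall k, alpha (k + 1, true) = - alpha (1 - k, true)).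
Proof.
split => [/anticentP H | [H1 H2]].
  split => k.
    have := H (k + 1, true); rewrite /dmul /dinv /da /db /= !addr0.
    by rewrite addrK (_ : 1 - (k + 1) = - k) //; ring.
  by have := H (k, false); rewrite /dmul /dinv /da /db /= !addr0.
apply/anticentP => -[k j]; rewrite /dmul /dinv /da /db /=.
case: j; rewrite /= !addr0 ?H2 //.
by rewrite H1 opprB.
Qed.
End C.

Unset Implicit Arguments.
Set Strict Implicit.


Theorem lemma3p2 (F : fieldType) (n : nat) (hn : (3 <= n)%N)
  (hchar : [pchar F] =i pred0 \/
           exists p : nat, [/\ prime p, odd p & p \in [pchar F]]) :
  let A (i : nat) : galg F n := gel F (dapow n i%:Z) - gel F (dapow n (- i%:Z)) in
  let idx := iota 1 ((n - 1) %/ 2) in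
  basis_of_anticent (gel F (db n))
    ([seq A i | i <- idx] ++ [seq gmul (A i) (gel F (db n)) | i <- idx])
  /\
  basis_of_anticent (gel F (dmul (da n) (db n)))
    ([seq A i | i <- idx] ++
     [seq gmul (gmul (gel F (da n)) (A i)) (gel F (db n)) | i <- idx]).
Proof.
move=> A idx.
have hn2 : (2 < n)%N by [].
have two : (2%:R : F) != 0.
  case: hchar => [H|[p [pp op pc]]].
    apply/negP => /eqP h2.
    have : (2%N \in [pchar F]) by rewrite inE /= h2 eqxx.
    by rewrite H.
  apply/eqP => h2; move: pc; rewrite inE => /andP[_ /eqP].
  rewrite -(odd_double_half p) op natrD -muln2 natrM h2 mulr0 addr0.
  by move/eqP; rewrite oner_eq0.
set m := ((n - 1) %/ 2)%N.
split.
  apply: (@gen_basis F _ (Ael F n) (Q1 F n) m (anticent (gel F (db n)))).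
  - by apply/antib => k j; rewrite !pt0 oppr0.
  - move=> a u v /antib Hu /antib Hv; apply/antib => k j.
    by rewrite !ffunE Hu Hv scalerN opprD.
  - move=> i; apply/antib => k j; rewrite !Apt.
    by case: j; rewrite ?oppr0 // e_opp opprK.
  - move=> i; apply/antib => k j; rewrite !Q1pt.
    by case: j; rewrite ?oppr0 // e_opp opprK.
  - move=> c d H l lm.
    have E1 : (\sum_(j < m) (c j *: Ael F n j.+1 + d j *: Q1 F n j.+1)) ((l.+1)%:R, false) = c l.
      rewrite sum_ffunE -[RHS](K2 hn2 c lm); apply: eq_bigr => j _.
      by rewrite ptE Apt Q1pt mulr0 addr0.
    have E2 : (\sum_(j < m) (c j *: Ael F n j.+1 + d j *: Q1 F n j.+1)) ((l.+1)%:R, true) = d l.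
      rewrite sum_ffunE -[RHS](K2 hn2 d lm); apply: eq_bigr => j _.
      by rewrite ptE Apt Q1pt mulr0 add0r.
    by split; [rewrite -E1 | rewrite -E2]; rewrite H pt0.
  - move=> v /antib Hv.
    exists (fun j => v ((j.+1)%:R, false)), (fun j => v ((j.+1)%:R, true)).
    apply/ffunP => -[k j]; rewrite sum_ffunE.
    case: j.
      have fa : forall x, v (- x, true) = - v (x, true) by move=> x; rewrite Hv opprK.
      rewrite -[LHS](K1 hn2 two fa k); apply: eq_bigr => j _.
      by rewrite ptE Apt Q1pt mulr0 add0r.
    have fa : forall x, v (- x, false) = - v (x, false) by move=> x; rewrite Hv opprK.
    rewrite -[LHS](K1 hn2 two fa k); apply: eq_bigr => j _.
    by rewrite ptE Apt Q1pt mulr0 addr0.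
apply: (@gen_basis F _ (Ael F n) (Q2 F n) m (anticent (gel F (dmul (da n) (db n))))).
- by apply/antiab; split => k; rewrite !pt0 oppr0.
- move=> a u v /antiab [Hu1 Hu2] /antiab [Hv1 Hv2]; apply/antiab; split => k.
    by rewrite !ffunE Hu1 Hv1 scalerN opprD.
  by rewrite !ffunE Hu2 Hv2 scalerN opprD.
- move=> i; apply/antiab; split => k; rewrite !Apt ?oppr0 //.
  by rewrite e_opp opprK.
- move=> i; apply/antiab; split => k; rewrite !Q2pt ?oppr0 //.
  by rewrite addrK (_ : 1 - k - 1 = - k) ?e_opp ?opprK //; ring.
- move=> c d H l lm.
  have E1 : (\sum_(j < m) (c j *: Ael F n j.+1 + d j *: Q2 F n j.+1)) ((l.+1)%:R, false) = c l.
    rewrite sum_ffunE -[RHS](K2 hn2 c lm); apply: eq_bigr => j _.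
    by rewrite ptE Apt Q2pt mulr0 addr0.
  have E2 : (\sum_(j < m) (c j *: Ael F n j.+1 + d j *: Q2 F n j.+1)) ((l.+1)%:R + 1, true) = d l.
    rewrite sum_ffunE -[RHS](K2 hn2 d lm); apply: eq_bigr => j _.
    by rewrite ptE Apt Q2pt addrK mulr0 add0r.
  by split; [rewrite -E1 | rewrite -E2]; rewrite H pt0.
- move=> v /antiab [Hv1 Hv2].
  exists (fun j => v ((j.+1)%:R, false)), (fun j => v ((j.+1)%:R + 1, true)).
  apply/ffunP => -[k j]; rewrite sum_ffunE.
  case: j.
    have fa : forall x, (fun y => v (y + 1, true)) (- x) = - (fun y => v (y + 1, true)) x.
      by move=> x /=; rewrite (Hv2 x) opprK (addrC (- x)).
    rewrite -{1}(subrK 1 k) -[LHS](K1 hn2 two fa (k - 1)); apply: eq_bigr => j _.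
    by rewrite ptE Apt Q2pt mulr0 add0r.
  have fa : forall x, v (- x, false) = - v (x, false) by move=> x; rewrite Hv1 opprK.
  rewrite -[LHS](K1 hn2 two fa k); apply: eq_bigr => j _.
  by rewrite ptE Apt Q2pt mulr0 addr0.
Qed.
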